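(* Let $d>0$, $a\ge0$, $r>0$ and $0<x_1<L$. Then $$\lim_{\xi\to+\infty}\lambda_1\big(d,a,r-\xi\chi_{(x_1,L]},(0,L)\big)=\lambda_1^D\big(d,a,r,(0,x_1)\big).$$
   Context: $\chi_{(x_1,L]}(x)=1$ for $x_1<x\le L$ and $0$ for $0\le x\le x_1$. For $0\le y_1<y_2\le L$ and bounded $s$, $\lambda_1(d,a,s,(y_1,y_2))$ denotes the principal eigenvalue (the eigenvalue with a positive eigenfunction) of $d\varphi''-a\varphi'+s(x)\varphi=\lambda\varphi$ on $(y_1,y_2)$, $d\varphi'(y_1)-a\varphi(y_1)=\varphi'(y_2)=0$. $\lambda_1^D(d,a,r,(y_1,y_2))$ denotes the principal eigenvalue of $d\varphi''-a\varphi'+r\varphi=\lambda\varphi$ on $(y_1,y_2)$ with $d\varphi'(y_1)-a\varphi(y_1)=0$ and $\varphi(y_2)=0$. *)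

(* Defs.v *)
From Stdlib Require Import Reals Lra ClassicalEpsilon.
From Coquelicot Require Import Coquelicot.
Open Scope R_scope.

Definition chi (x1 L : R) (x : R) : R :=
  if Rlt_le_dec x1 x then (if Rle_dec x L then 1 else 0) else 0.

(* phi is a (strong, W^{2,infty}-type) solution on [y1,y2] of
     d phi'' - a phi' + s phi = lam phi,
   with phi' its derivative on [y1,y2]; the second-order equation is
   stated in integrated form:  d (phi'(x) - phi'(y1)) = int_{y1}^x (a phi' - s phi + lam phi). *)
Definition solves_eig (d a : R) (s : R -> R) (y1 y2 lam : R)
  (phi dphi : R -> R) : Prop :=
  (forall x, y1 <= x <= y2 -> is_derive phi x (dphi x)) /\
  (forall x, y1 <= x <= y2 ->
     is_RInt (fun t => a * dphi t - s t * phi t + lam * phi t) y1 x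
             (d * (dphi x - dphi y1))).

Definition is_principal_eig (d a : R) (s : R -> R) (y1 y2 lam : R) : Prop :=
  exists phi dphi : R -> R,
    solves_eig d a s y1 y2 lam phi dphi /\
    (forall x, y1 < x < y2 -> 0 < phi x) /\
    d * dphi y1 - a * phi y1 = 0 /\ dphi y2 = 0.

Definition is_principal_eig_D (d a r : R) (y1 y2 lam : R) : Prop :=
  exists phi dphi : R -> R,
    solves_eig d a (fun _ => r) y1 y2 lam phi dphi /\
    (forall x, y1 < x < y2 -> 0 < phi x) /\
    d * dphi y1 - a * phi y1 = 0 /\ phi y2 = 0.

Definition lambda1 (d a : R) (s : R -> R) (y1 y2 : R) : R :=
  epsilon (inhabits 0) (fun lam => is_principal_eig d a s y1 y2 lam).

Definition lambda1D (d a r : R) (y1 y2 : R) : R :=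
  epsilon (inhabits 0) (fun lam => is_principal_eig_D d a r y1 y2 lam).

(* Main.v *)
Require Import Defs.
From Stdlib Require Import Reals Lra ClassicalEpsilon.
From Coquelicot Require Import Coquelicot.
Open Scope R_scope.

Lemma cont_plus (f g : R -> R) x : continuous f x -> continuous g x -> continuous (fun y => f y + g y) x.
Proof. intros; apply (continuous_plus f g x); auto. Qed.
Lemma cont_mult (f g : R -> R) x : continuous f x -> continuous g x -> continuous (fun y => f y * g y) x.
Proof. intros; apply (continuous_mult f g x); auto. Qed.
Lemma cont_opp (f : R -> R) x : continuous f x -> continuous (fun y => - f y) x.
Proof. intros; apply (continuous_opp f x); auto. Qed.
Lemma cont_minus (f g : R -> R) x : continuous f x -> continuous g x -> continuous (fun y => f y - g y) x.
Proof. intros; apply cont_plus; auto; apply cont_opp; auto. Qed.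
Lemma cont_const (c : R) (x : R) : continuous (fun _ : R => c) x.
Proof. apply continuous_const. Qed.
Lemma cont_id x : continuous (fun y : R => y) x.
Proof. apply continuous_id. Qed.
Lemma cont_exp (f : R -> R) x : continuous f x -> continuous (fun y => exp (f y)) x.
Proof. intros; apply (continuous_comp f exp); auto.
  apply (ex_derive_continuous (V:=R_NormedModule)).  auto_derive; auto. Qed.

Lemma is_RInt_zero (a b : R) : is_RInt (fun _ => 0) a b 0.
Proof. pose proof (is_RInt_const (V:=R_NormedModule) a b 0) as H. refine (eq_ind _ (fun v => is_RInt (fun _ : R => 0) a b v) H _ _). unfold scal; simpl; unfold mult; simpl; ring. Qed.

Lemma chasles_R (f : R -> R) a b c l1 l2 : is_RInt f a b l1 -> is_RInt f b c l2 -> is_RInt f a c (l1 + l2).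
Proof. intros H1 H2. exact (is_RInt_Chasles f a b c l1 l2 H1 H2). Qed.

Definition clamp (y1 y2 x : R) : R := Rmax y1 (Rmin x y2).

Lemma clamp_in y1 y2 x : y1 <= y2 -> y1 <= clamp y1 y2 x <= y2.
Proof. unfold clamp, Rmax, Rmin; intros; repeat destruct Rle_dec; lra. Qed.
Lemma clamp_id y1 y2 x : y1 <= x <= y2 -> clamp y1 y2 x = x.
Proof. unfold clamp, Rmax, Rmin; intros; repeat destruct Rle_dec; lra. Qed.
Lemma clamp_lip y1 y2 x y : y1 <= y2 -> Rabs (clamp y1 y2 y - clamp y1 y2 x) <= Rabs (y - x).
Proof. unfold clamp, Rmax, Rmin; intros; repeat destruct Rle_dec;
  unfold Rabs; repeat destruct Rcase_abs; lra. Qed.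

Lemma ball_R (x e y : R) : ball x e y <-> Rabs (y - x) < e.
Proof. reflexivity. Qed.
Lemma ball_R' (x e y : R) : ball x e y -> x - e < y < x + e.
Proof. intros H. change (Rabs (y - x) < e) in H. apply Rabs_def2 in H. lra. Qed.

Lemma clamp_cont y1 y2 x : y1 <= y2 -> continuous (clamp y1 y2) x.
Proof.
  intros H. apply filterlim_locally. intros eps.
  exists eps. intros y Hy. apply ball_R. apply ball_R in Hy.
  eapply Rle_lt_trans; [apply clamp_lip; auto|]. auto.
Qed.

Lemma cont_clamp_comp (f : R -> R) y1 y2 x : y1 <= y2 ->
  (forall z, y1 <= z <= y2 -> continuous f z) -> continuous (fun x => f (clamp y1 y2 x)) x.
Proof. intros. apply (continuous_comp (clamp y1 y2) f). apply clamp_cont; auto.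
  apply H0, clamp_in; auto. Qed.

Lemma locally_interior (P : R -> Prop) t y1 y2 : y1 < t < y2 ->
  (forall z, y1 < z < y2 -> P z) -> locally t P.
Proof.
  intros Ht HP. assert (He : 0 < Rmin (t - y1) (y2 - t)) by (apply Rmin_glb_lt; lra).
  exists (mkposreal _ He). intros z Hz. apply ball_R' in Hz. simpl in Hz.
  apply HP. pose proof (Rmin_l (t - y1) (y2 - t)). pose proof (Rmin_r (t - y1) (y2 - t)).
  lra.
Qed.

Lemma int_clamp_cont (g F : R -> R) y1 y2 : y1 < y2 ->
  (forall z, y1 <= z <= y2 -> is_RInt g y1 z (F z)) ->
  forall x, continuous (fun x => F (clamp y1 y2 x)) x.
Proof.
  intros Hy HI x.
  set (gt := fun t => if Rle_dec y1 t then if Rle_dec t y2 then g t else 0 else 0).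
  assert (F0 : F y1 = 0).
  { rewrite <- (is_RInt_unique _ _ _ _ (HI y1 ltac:(lra))). rewrite RInt_point. reflexivity. }
  assert (Hall : forall z, is_RInt gt y1 z (F (clamp y1 y2 z))).
  { intros z. destruct (Rle_dec z y1) as [Hz|Hz].
      assert (clamp y1 y2 z = y1) as -> by (unfold clamp, Rmax, Rmin; repeat destruct Rle_dec; lra).
      rewrite F0. apply is_RInt_ext with (fun _ => 0).
      { intros t Ht. rewrite Rmin_right in Ht by lra. rewrite Rmax_left in Ht by lra.
        unfold gt. destruct Rle_dec; lra. }
      apply is_RInt_zero.
    - destruct (Rle_dec z y2) as [Hz2|Hz2].
      + rewrite clamp_id by lra. apply is_RInt_ext with g; [|apply HI; lra].
        intros t Ht. rewrite Rmin_left in Ht by lra. rewrite Rmax_right in Ht by lra.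
        unfold gt. repeat destruct Rle_dec; lra.
      + assert (clamp y1 y2 z = y2) as -> by (unfold clamp, Rmax, Rmin; repeat destruct Rle_dec; lra).
        replace (F y2) with (F y2 + 0) by ring.
        apply chasles_R with y2.
        * apply is_RInt_ext with g; [|apply HI; lra].
          intros t Ht. rewrite Rmin_left in Ht by lra. rewrite Rmax_right in Ht by lra.
          unfold gt. repeat destruct Rle_dec; lra.
        * apply is_RInt_ext with (fun _ => 0); [|apply is_RInt_zero].
          intros t Ht. rewrite Rmin_left in Ht by lra. rewrite Rmax_right in Ht by lra.
          unfold gt. repeat destruct Rle_dec; lra. }
  apply (continuous_RInt_1 gt y1 x). exists (mkposreal 1 Rlt_0_1). intros; apply Hall.
Qed.

Lemma eig_reg d a (s : R -> R) y1 y2 lam phi dphi : 0 < d -> y1 < y2 ->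
  solves_eig d a s y1 y2 lam phi dphi ->
  (forall x, continuous (fun x => dphi (clamp y1 y2 x)) x) /\
  (forall z, y1 <= z <= y2 -> continuous phi z) /\
  (forall t, y1 < t < y2 -> continuous s t ->
     is_derive dphi t ((a * dphi t - s t * phi t + lam * phi t) / d)).
Proof.
  intros Hd0 Hy [Hd Hi].
  assert (Hphi : forall z, y1 <= z <= y2 -> continuous phi z).
  { intros z Hz. apply (ex_derive_continuous (V:=R_NormedModule)). exists (dphi z). apply Hd; auto. }
  set (g := fun t => a * dphi t - s t * phi t + lam * phi t).
  set (F := fun z => d * (dphi z - dphi y1)).
  assert (HF : forall x, continuous (fun x => F (clamp y1 y2 x)) x).
  { apply int_clamp_cont with g; auto. }
  assert (Hdc : forall x, continuous (fun x => dphi (clamp y1 y2 x)) x).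
  { intros x. apply continuous_ext with (fun x => dphi y1 + / d * F (clamp y1 y2 x)).
    { intros y. simpl. unfold F. field. lra. }
    apply cont_plus. apply cont_const. apply cont_mult. apply cont_const. apply HF. }
  split; [exact Hdc|]. split; [exact Hphi|].
  intros t Ht Hs.
  assert (Hdt : continuous dphi t).
  { apply continuous_ext_loc with (fun x => dphi (clamp y1 y2 x)); auto.
    apply locally_interior with y1 y2; auto. intros z Hz. rewrite clamp_id; lra. }
  assert (Hg : continuous g t).
  { unfold g. apply cont_plus. apply cont_minus. apply cont_mult. apply cont_const. auto.
    apply cont_mult; auto. apply Hphi; lra. apply cont_mult. apply cont_const. apply Hphi; lra. }
  assert (HdF : is_derive F t (g t)).
  { apply (is_derive_RInt g F y1 t); auto.
    apply locally_interior with y1 y2; auto. intros z Hz. apply Hi; lra. }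
  apply is_derive_ext with (fun z => dphi y1 + / d * F z).
  { intros z. simpl. unfold F. field. lra. }
  auto_derive. exists (g t); auto.
  replace (Derive (fun x : R => F x) t) with (g t) by (symmetry; apply is_derive_unique; auto). unfold g. field. lra.
Qed.

Lemma Dv (f : R -> R) x l : is_derive f x l -> Derive (fun y => f y) x = l.
Proof. intros H. apply is_derive_unique. exact H. Qed.

Lemma uniq d a (s : R -> R) y1 y2 c lam mu phi dphi psi dpsi :
  0 < d -> y1 < y2 -> y1 <= c <= y2 ->
  (forall t, y1 < t < y2 -> t <> c -> continuous s t) ->
  solves_eig d a s y1 y2 lam phi dphi -> solves_eig d a s y1 y2 mu psi dpsi ->
  (forall x, y1 < x < y2 -> 0 < phi x) -> (forall x, y1 < x < y2 -> 0 < psi x) ->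
  d * dphi y1 - a * phi y1 = 0 -> d * dpsi y1 - a * psi y1 = 0 ->
  dphi y2 * psi y2 - phi y2 * dpsi y2 = 0 -> lam = mu.
Proof.
  intros Hd Hy Hc Hs Hp Hq Pp Qp Bp Bq B2.
  destruct (eig_reg d a s y1 y2 lam phi dphi Hd Hy Hp) as [Pdc [Pc Pd]].
  destruct (eig_reg d a s y1 y2 mu psi dpsi Hd Hy Hq) as [Qdc [Qc Qd]].
  destruct Hp as [Pder _]. destruct Hq as [Qder _].
  set (cl := clamp y1 y2).
  set (kf := fun t => exp (-(a/d)*t) * (phi (cl t) * psi (cl t))).
  assert (Hkc : forall x, continuous kf x).
  { intros x. unfold kf. apply cont_mult. apply cont_exp. apply cont_mult. apply cont_const. apply cont_id.
    apply cont_mult; apply cont_clamp_comp; auto; lra. }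
  set (K := fun x => RInt kf y1 x).
  assert (HK : forall x, is_derive K x (kf x)).
  { intros x. apply (is_derive_RInt kf K y1 x); auto.
    exists (mkposreal 1 Rlt_0_1). intros b _. unfold K. apply (RInt_correct (V:=R_CompleteNormedModule)). apply ex_RInt_continuous. auto. }
  assert (K0 : K y1 = 0) by (unfold K; rewrite RInt_point; reflexivity).
  assert (Kpos : 0 < K y2).
  { unfold K. apply RInt_gt_0; auto. intros x Hx. unfold kf, cl. rewrite clamp_id by lra.
    apply Rmult_lt_0_compat. apply exp_pos. apply Rmult_lt_0_compat; auto. }
  clearbody K.
  set (H := fun x => exp (-(a/d)*(cl x)) * (d * (dphi (cl x) * psi (cl x) - phi (cl x) * dpsi (cl x))) - (lam - mu) * K x).
  assert (HHc : forall x, continuity_pt H x).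
  { intros x. apply continuity_pt_filterlim. change (continuous H x). unfold H.
    apply cont_minus. apply cont_mult. apply cont_exp. apply cont_mult. apply cont_const. apply clamp_cont; lra.
    apply cont_mult. apply cont_const. apply cont_minus; apply cont_mult; auto; apply cont_clamp_comp; auto; lra.
    apply cont_mult. apply cont_const. apply (ex_derive_continuous (V:=R_NormedModule)). exists (kf x); auto. }
  assert (HHd : forall t, y1 < t < y2 -> t <> c -> is_derive H t 0).
  { intros t Ht Htc.
    apply is_derive_ext_loc with (fun x => exp (-(a/d)*x) * (d * (dphi x * psi x - phi x * dpsi x)) - (lam - mu) * K x).
    { apply locally_interior with y1 y2; auto. intros z Hz. unfold H, cl. rewrite clamp_id; lra. }
    assert (E1 := Pder t ltac:(lra)). assert (E2 := Qder t ltac:(lra)).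
    assert (E3 := Pd t Ht (Hs t Ht Htc)). assert (E4 := Qd t Ht (Hs t Ht Htc)).
    assert (E5 := HK t).
    auto_derive.
    { repeat split; eexists; eauto. }
    rewrite (Dv _ _ _ E1), (Dv _ _ _ E2), (Dv _ _ _ E3), (Dv _ _ _ E4), (Dv _ _ _ E5).
    unfold kf, cl. rewrite clamp_id by lra. field. lra. }
  assert (E1 : H c = H y1).
  { destruct (MVT_gen H y1 c (fun _ => 0)) as [xi [_ Hxi]].
    - intros x Hx. rewrite Rmin_left, Rmax_right in Hx by lra. apply HHd; lra.
    - intros x _. apply HHc.
    - lra. }
  assert (E2 : H y2 = H c).
  { destruct (MVT_gen H c y2 (fun _ => 0)) as [xi [_ Hxi]].
    - intros x Hx. rewrite Rmin_left, Rmax_right in Hx by lra. apply HHd; lra.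
    - intros x _. apply HHc.
    - lra. }
  unfold H, cl in E1, E2.   rewrite !(clamp_id y1 y2 y1) in E1 by lra. rewrite !(clamp_id y1 y2 y2) in E2 by lra. rewrite !(clamp_id y1 y2 c) in E1, E2 by lra.
  rewrite K0 in E1.
  assert (W1 : d * (dphi y1 * psi y1 - phi y1 * dpsi y1) = 0).
  { replace (d * (dphi y1 * psi y1 - phi y1 * dpsi y1)) with
      ((d * dphi y1 - a * phi y1) * psi y1 - phi y1 * (d * dpsi y1 - a * psi y1)) by ring.
    rewrite Bp, Bq. ring. }
  rewrite W1, B2 in *. 
  assert ((lam - mu) * K y2 = 0) by nra.
  apply Rmult_integral in H0. destruct H0; lra.
Qed.

Definition uF k w t := w * cos (w * t) + k * sin (w * t).
Definition duF k w t := w * (- w * sin (w * t) + k * cos (w * t)).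
Definition phiL k w t := exp (k * t) * uF k w t.
Definition dphiL k w t := exp (k * t) * (k * uF k w t + duF k w t).
Definition ddphiL k w t := exp (k * t) * (k * k * uF k w t + 2 * k * duF k w t - w * w * uF k w t).

Definition vF L k m t := (m + k) / 2 * exp (m * (L - t)) + (m - k) / 2 * exp (- (m * (L - t))).
Definition dvF L k m t := - m * (m + k) / 2 * exp (m * (L - t)) + m * (m - k) / 2 * exp (- (m * (L - t))).
Definition phiR L k m C t := C * exp (k * t) * vF L k m t.
Definition dphiR L k m C t := C * exp (k * t) * (k * vF L k m t + dvF L k m t).
Definition ddphiR L k m C t := C * exp (k * t) * (k * k * vF L k m t + 2 * k * dvF L k m t + m * m * vF L k m t).

Lemma phiL_d k w t : is_derive (phiL k w) t (dphiL k w t).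
Proof. unfold phiL, dphiL, uF, duF. auto_derive; auto. ring. Qed.
Lemma dphiL_d k w t : is_derive (dphiL k w) t (ddphiL k w t).
Proof. unfold ddphiL, dphiL, uF, duF. auto_derive; auto. ring. Qed.
Lemma ddphiL_c k w t : continuous (ddphiL k w) t.
Proof. apply (ex_derive_continuous (V:=R_NormedModule)). unfold ddphiL, uF, duF. auto_derive; auto. Qed.
Lemma phiR_d L k m C t : is_derive (phiR L k m C) t (dphiR L k m C t).
Proof. unfold phiR, dphiR, vF, dvF. auto_derive; auto. unfold Rminus. field. Qed.
Lemma dphiR_d L k m C t : is_derive (dphiR L k m C) t (ddphiR L k m C t).
Proof. unfold ddphiR, dphiR, vF, dvF. auto_derive; auto. unfold Rminus. field. Qed.
Lemma ddphiR_c L k m C t : continuous (ddphiR L k m C) t.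
Proof. apply (ex_derive_continuous (V:=R_NormedModule)). unfold ddphiR, vF, dvF. auto_derive; auto. Qed.

Lemma seg_int (dF ddF f : R -> R) d p q : p <= q ->
  (forall x, is_derive dF x (ddF x)) -> (forall x, continuous ddF x) ->
  (forall t, p < t < q -> f t = d * ddF t) ->
  is_RInt f p q (d * (dF q - dF p)).
Proof.
  intros Hpq Hd Hc Hf.
  apply is_RInt_ext with (fun t => d * ddF t).
  { intros t Ht. rewrite Rmin_left, Rmax_right in Ht by lra. symmetry; apply Hf; auto. }
  pose proof (is_RInt_derive (fun x => d * dF x) (fun x => d * ddF x) p q) as H.
  replace (d * (dF q - dF p)) with (minus (d * dF q) (d * dF p)) by (unfold minus, plus, opp; simpl; ring).
  apply H.
  - intros x _. apply is_derive_scal. auto.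
  - intros x _. apply cont_mult. apply cont_const. auto.
Qed.

Lemma ode_L d a r k w t : 0 < d -> k = a / (2 * d) ->
  a * dphiL k w t - r * phiL k w t + (r - d * k * k - d * w * w) * phiL k w t = d * ddphiL k w t.
Proof. intros Hd Hk. unfold dphiL, phiL, ddphiL. subst k. field. lra. Qed.

Lemma ode_R d a r xi L k w m C t : 0 < d -> k = a / (2 * d) -> m * m = xi / d - w * w ->
  a * dphiR L k m C t - (r - xi) * phiR L k m C t + (r - d * k * k - d * w * w) * phiR L k m C t
  = d * ddphiR L k m C t.
Proof.
  intros Hd Hk Hm. unfold dphiR, phiR, ddphiR.
  replace (m * m * vF L k m t) with ((xi / d - w * w) * vF L k m t) by (rewrite Hm; ring).
  subst k. field. lra.
Qed.

Lemma vF_pos L k m t : 0 <= k -> 0 < m -> t <= L -> 0 < vF L k m t.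
Proof.
  intros Hk Hm Ht. unfold vF.
  assert (H1 : exp (- (m * (L - t))) <= exp (m * (L - t))).
  { destruct (Req_dec (m * (L - t)) 0) as [E|E]. rewrite E, Ropp_0; lra.
    left. apply exp_increasing. nra. }
  pose proof (exp_pos (- (m * (L - t)))). nra.
Qed.

Definition pw (c : R) (g h : R -> R) (t : R) : R := if Rle_dec t c then g t else h t.

Lemma pw_le c g h t : t <= c -> pw c g h t = g t.
Proof. unfold pw; destruct Rle_dec; lra. Qed.
Lemma pw_gt c g h t : c < t -> pw c g h t = h t.
Proof. unfold pw; destruct Rle_dec; lra. Qed.

Lemma pw_der (g h dg dh : R -> R) c x :
  (forall y, is_derive g y (dg y)) -> (forall y, is_derive h y (dh y)) ->
  g c = h c -> dg c = dh c -> is_derive (pw c g h) x (pw c dg dh x).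
Proof.
  intros Hg Hh E0 E1. unfold pw.
  destruct (Rtotal_order x c) as [Hx|[Hx|Hx]].
  - destruct (Rle_dec x c); [|lra].
    apply is_derive_ext_loc with g; auto.
    exists (mkposreal (c - x) ltac:(lra)). intros y Hy. apply ball_R' in Hy. simpl in Hy.
    destruct (Rle_dec y c); lra.
  - subst x. destruct (Rle_dec c c); [|lra].
    apply is_derive_Reals. pose proof (proj1 (is_derive_Reals _ _ _) (Hg c)) as G.
    pose proof (proj1 (is_derive_Reals _ _ _) (Hh c)) as H. rewrite <- E1 in H.
    intros eps Heps. destruct (G eps Heps) as [d1 Hd1]. destruct (H eps Heps) as [d2 Hd2].
    assert (Hd : 0 < Rmin d1 d2) by (apply Rmin_glb_lt; apply cond_pos).
    exists (mkposreal _ Hd). intros hh Hh0 Hhl. simpl in Hhl.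
    pose proof (Rmin_l d1 d2). pose proof (Rmin_r d1 d2).
    cbv beta. destruct (Rle_dec c c) as [_|]; [|lra].
    destruct (Rle_dec (c + hh) c).
    + apply Hd1; auto. lra.
    + rewrite E0. apply Hd2; auto. lra.
  - destruct (Rle_dec x c); [lra|].
    apply is_derive_ext_loc with h; auto.
    exists (mkposreal (x - c) ltac:(lra)). intros y Hy. apply ball_R' in Hy. simpl in Hy.
    destruct (Rle_dec y c); lra.
Qed.

Definition Gf L x1 k xi d w :=
  duF k w x1 * vF L k (sqrt (xi / d - w * w)) x1 - uF k w x1 * dvF L k (sqrt (xi / d - w * w)) x1.

Lemma exist_xi d a r x1 L xi w : 0 < d -> 0 <= a -> 0 < x1 -> x1 < L -> 0 < w -> 0 < xi / d - w * w ->
  Gf L x1 (a / (2 * d)) xi d w = 0 ->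
  (forall t, 0 <= t <= x1 -> 0 < uF (a / (2 * d)) w t) ->
  is_principal_eig d a (fun x => r - xi * chi x1 L x) 0 L
     (r - d * (a / (2 * d)) * (a / (2 * d)) - d * w * w).
Proof.
  intros Hd Ha Hx1 HL Hw Hm HG Hu.
  set (k := a / (2 * d)) in *.
  assert (Hk : 0 <= k) by (unfold k; apply Rmult_le_pos; [lra| left; apply Rinv_0_lt_compat; lra]).
  set (m := sqrt (xi / d - w * w)) in *.
  assert (Hm0 : 0 < m) by (apply sqrt_lt_R0; auto).
  assert (Hmm : m * m = xi / d - w * w) by (apply sqrt_sqrt; lra).
  assert (Hv1 : 0 < vF L k m x1) by (apply vF_pos; lra).
  set (C := uF k w x1 / vF L k m x1).
  assert (HC : 0 < C) by (unfold C; apply Rdiv_lt_0_compat; auto; apply Hu; lra).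
  assert (E0 : phiL k w x1 = phiR L k m C x1).
  { unfold phiL, phiR, C. field. lra. }
  assert (E1 : dphiL k w x1 = dphiR L k m C x1).
  { unfold dphiL, dphiR, C. unfold Gf in HG. fold k m in HG.
    apply Rmult_eq_reg_r with (vF L k m x1); [|lra].
    field_simplify; [|lra]. 
    replace (duF k w x1) with (uF k w x1 * dvF L k m x1 / vF L k m x1).
    field. lra. 
    apply Rmult_eq_reg_r with (vF L k m x1); [|lra]. field_simplify; lra. }
  exists (pw x1 (phiL k w) (phiR L k m C)), (pw x1 (dphiL k w) (dphiR L k m C)).
  split; [split|split; [|split]].
  - intros x _. apply pw_der; auto. apply phiL_d. apply phiR_d.
  - intros x Hx.
    destruct (Rle_dec x x1) as [Hx1'|Hx1'].
    + rewrite (pw_le x1 _ _ x), (pw_le x1 _ _ 0) by lra.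
      apply seg_int with (ddphiL k w); try lra. apply dphiL_d. apply ddphiL_c.
      intros t Ht. unfold pw. destruct (Rle_dec t x1); [|lra].
      unfold chi. destruct (Rlt_le_dec x1 t); [lra|].
      rewrite <- ode_L with (r := r) (a := a); auto. ring.
    + rewrite (pw_gt x1 _ _ x), (pw_le x1 _ _ 0) by lra.
      replace (d * (dphiR L k m C x - dphiL k w 0)) with
        (d * (dphiL k w x1 - dphiL k w 0) + d * (dphiR L k m C x - dphiR L k m C x1)) by (rewrite E1; ring).
      apply chasles_R with x1.
      * apply seg_int with (ddphiL k w); try lra. apply dphiL_d. apply ddphiL_c.
        intros t Ht. unfold pw. destruct (Rle_dec t x1); [|lra].
        unfold chi. destruct (Rlt_le_dec x1 t); [lra|].
        rewrite <- ode_L with (r := r) (a := a); auto. ring.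
      * apply seg_int with (ddphiR L k m C); try lra. apply dphiR_d. apply ddphiR_c.
        intros t Ht. unfold pw. destruct (Rle_dec t x1); [lra|].
        unfold chi. destruct (Rlt_le_dec x1 t); [|lra]. destruct (Rle_dec t L); [|lra].
        rewrite <- ode_R with (r := r) (a := a) (xi := xi) (w := w); auto. ring.
  - intros x Hx. unfold pw. destruct (Rle_dec x x1).
    + unfold phiL. apply Rmult_lt_0_compat. apply exp_pos. apply Hu; lra.
    + unfold phiR. apply Rmult_lt_0_compat. apply Rmult_lt_0_compat; auto. apply exp_pos.
      apply vF_pos; lra.
  - unfold pw. destruct (Rle_dec 0 x1); [|lra].
    unfold dphiL, phiL, uF, duF. rewrite !Rmult_0_r, sin_0, cos_0, exp_0. unfold k. field. lra.
  - unfold pw. destruct (Rle_dec L x1); [lra|].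
    unfold dphiR, vF, dvF. rewrite Rminus_diag, Rmult_0_r, Ropp_0, exp_0. field.
Qed.

Lemma exist_D d a r x1 w : 0 < d -> 0 <= a -> 0 < x1 ->
  uF (a / (2 * d)) w x1 = 0 ->
  (forall t, 0 < t < x1 -> 0 < uF (a / (2 * d)) w t) ->
  is_principal_eig_D d a r 0 x1 (r - d * (a / (2 * d)) * (a / (2 * d)) - d * w * w).
Proof.
  intros Hd Ha Hx1 HU Hu.
  set (k := a / (2 * d)) in *.
  exists (phiL k w), (dphiL k w).
  split; [split|split; [|split]].
  - intros x _. apply phiL_d.
  - intros x Hx. apply seg_int with (ddphiL k w); try lra. apply dphiL_d. apply ddphiL_c.
    intros t Ht. rewrite <- ode_L with (r := r) (a := a); auto.
  - intros x Hx. unfold phiL. apply Rmult_lt_0_compat. apply exp_pos. apply Hu; lra.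
  - unfold dphiL, phiL, uF, duF. rewrite !Rmult_0_r, sin_0, cos_0, exp_0. unfold k. field. lra.
  - unfold phiL. rewrite HU. ring.
Qed.

Lemma cpt_der (f : R -> R) x : ex_derive f x -> continuity_pt f x.
Proof. intros H. apply (proj2 (continuity_pt_filterlim f x)).
  exact (ex_derive_continuous (V:=R_NormedModule) f x H). Qed.

Lemma u_angle k w t : 0 < w -> uF k w t = w * sqrt (1 + (k / w)²) * cos (w * t - atan (k / w)).
Proof.
  intros Hw. assert (HS : 0 < sqrt (1 + (k / w)²)) by (apply sqrt_lt_R0; pose proof (Rle_0_sqr (k / w)); lra).
  rewrite cos_minus, cos_atan, sin_atan. unfold uF. field. split; lra.
Qed.

Lemma u_pos k w t : 0 < w -> -(PI/2) < w * t - atan (k / w) < PI/2 -> 0 < uF k w t.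
Proof.
  intros Hw Ht. rewrite u_angle by auto.
  assert (HS : 0 < sqrt (1 + (k / w)²)) by (apply sqrt_lt_R0; pose proof (Rle_0_sqr (k / w)); lra).
  apply Rmult_lt_0_compat. apply Rmult_lt_0_compat; auto. apply cos_gt_0; lra.
Qed.

Lemma atan_le x y : x <= y -> atan x <= atan y.
Proof. intros [H|H]. left; apply atan_increasing; auto. subst; lra. Qed.

Lemma atan_nonneg x : 0 <= x -> 0 <= atan x.
Proof. intros H. rewrite <- atan_0. apply atan_le; auto. Qed.

Lemma theta_lt k x1 w w' : 0 <= k -> 0 < x1 -> 0 < w -> w < w' ->
  w * x1 - atan (k / w) < w' * x1 - atan (k / w').
Proof.
  intros Hk Hx Hw Hw'.
  assert (atan (k / w') <= atan (k / w)).
  { apply atan_le. unfold Rdiv. apply Rmult_le_compat_l; auto. left. apply Rinv_lt_contravar; nra. }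
  nra.
Qed.

Lemma omegaD_ex k x1 : 0 <= k -> 0 < x1 -> {w | 0 < w /\ w * x1 - atan (k / w) = PI / 2}.
Proof.
  intros Hk Hx.
  pose proof PI_RGT_0.
  destruct (Ranalysis5.IVT_interv (fun w => w * x1 - atan (k / w) - PI / 2) (PI / (4 * x1)) (PI / x1))
    as [z [Hz Ez]].
  - intros w Hw. assert (0 < w).
    { eapply Rlt_le_trans; [|apply Hw]. apply Rdiv_lt_0_compat; lra. }
    apply cpt_der. auto_derive. lra.
  - apply Rmult_lt_compat_l; auto. apply Rinv_lt_contravar; nra.
  - replace (PI / (4 * x1) * x1) with (PI / 4) by (field; lra).
    pose proof (atan_nonneg (k / (PI / (4 * x1)))). 
    assert (0 <= k / (PI / (4 * x1))) by (apply Rdiv_le_0_compat; auto; apply Rdiv_lt_0_compat; lra).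
    specialize (H0 H1). lra.
  - replace (PI / x1 * x1) with PI by (field; lra).
    pose proof (atan_bound (k / (PI / x1))). lra.
  - exists z. split.
    + eapply Rlt_le_trans; [|apply Hz]. apply Rdiv_lt_0_compat; lra.
    + lra.
Qed.

Lemma G_pos L x1 k m U Du : 0 <= k -> x1 < L -> 0 < U -> k <= m -> / (L - x1) < m ->
  2 * Rabs Du / U < m -> 0 < Du * vF L k m x1 - U * dvF L k m x1.
Proof.
  intros Hk HL HU Hkm HmL HmD.
  assert (Hm : 0 < m) by (eapply Rle_lt_trans; [|apply HmL]; left; apply Rinv_0_lt_compat; lra).
  assert (HmD' : 1 < m * (L - x1)).
  { apply Rmult_lt_compat_r with (r := L - x1) in HmL; [|lra]. rewrite Rinv_l in HmL; lra. }
  unfold vF, dvF. rewrite exp_Ropp.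
  set (E := exp (m * (L - x1))).
  assert (HE : 0 < E) by apply exp_pos.
  assert (HEE : 3 <= E * E).
  { unfold E. rewrite <- exp_plus. left. eapply Rlt_trans; [|apply exp_ineq1]; lra. }
  set (iE := / E).
  assert (HiE : E * iE = 1) by (unfold iE; field; lra).
  assert (HiE0 : 0 < iE) by (unfold iE; apply Rinv_0_lt_compat; auto).
  assert (HiE3 : iE * 3 <= E) by nra.
  assert (Hv : (m + k) / 2 * E + (m - k) / 2 * iE <= 2 * (m + k) * E / 3) by nra.
  assert (Hv0 : 0 <= (m + k) / 2 * E + (m - k) / 2 * iE) by nra.
  assert (Hdv : m * (m + k) * E / 3 <= - (- m * (m + k) / 2 * E + m * (m - k) / 2 * iE)) by nra.
  assert (HUm : 2 * Rabs Du < U * m).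
  { apply Rmult_lt_compat_r with (r := U) in HmD; auto. unfold Rdiv in HmD.
    rewrite Rmult_assoc, Rinv_l in HmD; lra. }
  assert (HDu : - Rabs Du <= Du) by (pose proof (Rabs_pos Du); unfold Rabs in *; destruct Rcase_abs; lra).
  assert (Du * ((m + k) / 2 * E + (m - k) / 2 * iE) >= - Rabs Du * (2 * (m + k) * E / 3)).
  { pose proof (Rabs_pos Du). nra. }
  assert (0 < (m + k) * E) by nra.
  nra.
Qed.

Theorem lemma3p5 (d a r x1 L : R) :
  0 < d -> 0 <= a -> 0 < r -> 0 < x1 -> x1 < L ->
  is_lim (fun xi => lambda1 d a (fun x => r - xi * chi x1 L x) 0 L)
         p_infty (Finite (lambda1D d a r 0 x1)).
Proof.
  intros Hd Ha Hr Hx1 HL.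
  pose proof PI_RGT_0 as HPI.
  set (k := a / (2 * d)).
  assert (Hk : 0 <= k) by (unfold k; apply Rmult_le_pos; [lra| left; apply Rinv_0_lt_compat; lra]).
  destruct (omegaD_ex k x1 Hk Hx1) as [wD [HwD HthD]].
  assert (HUD : uF k wD x1 = 0).
  { rewrite u_angle by auto. replace (wD * x1 - atan (k / wD)) with (PI / 2) by lra. rewrite cos_PI2. ring. }
  assert (HuD : forall t, 0 < t < x1 -> 0 < uF k wD t).
  { intros t Ht. apply u_pos; auto. pose proof (atan_bound (k / wD)).
    assert (wD * t < wD * x1) by (apply Rmult_lt_compat_l; lra).
    assert (0 < wD * t) by nra. lra. }
  assert (HD := exist_D d a r x1 wD Hd Ha Hx1 HUD HuD). fold k in HD.
  assert (ED : lambda1D d a r 0 x1 = r - d * k * k - d * wD * wD).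
  { unfold lambda1D.
    pose proof (epsilon_spec (inhabits 0) (fun lam => is_principal_eig_D d a r 0 x1 lam) (ex_intro _ _ HD)) as HE.
    set (e := epsilon (inhabits 0) (fun lam => is_principal_eig_D d a r 0 x1 lam)) in HE |- *.
    destruct HE as [p2 [dp2 [S2 [P2 [B2 B2']]]]]. destruct HD as [p1 [dp1 [S1 [P1 [B1 B1']]]]].
    apply (uniq d a (fun _ => r) 0 x1 0 e _ p2 dp2 p1 dp1); auto; try lra.
    intros; apply cont_const. rewrite B2', B1'. ring. }
  rewrite ED.
  assert (HduD : duF k wD x1 < 0).
  { unfold duF. replace (wD * x1) with (PI / 2 + atan (k / wD)) by lra.
    rewrite sin_plus, cos_plus, sin_PI2, cos_PI2, cos_atan, sin_atan.
    assert (HS : 0 < sqrt (1 + (k / wD)²)) by (apply sqrt_lt_R0; pose proof (Rle_0_sqr (k / wD)); lra).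
    assert (0 < 1 / sqrt (1 + (k / wD)²)) by (apply Rdiv_lt_0_compat; lra).
    assert (0 <= k / wD / sqrt (1 + (k / wD)²)) by (apply Rdiv_le_0_compat; auto; apply Rdiv_le_0_compat; lra).
    set (A := 1 / sqrt (1 + (k / wD)²)) in *. set (B := k / wD / sqrt (1 + (k / wD)²)) in *.
    assert (0 < wD * wD * A) by (apply Rmult_lt_0_compat; nra).
    assert (0 <= wD * k * B) by (apply Rmult_le_pos; nra).
    match goal with |- ?X < 0 => replace X with (- (wD * wD * A) - wD * k * B) by ring end. lra. }
  apply is_lim_spec. intros eps. simpl.
  pose proof (cond_pos eps) as Heps.
  set (del := Rmin (wD / 2) (eps / (4 * d * wD))).
  assert (Hdel : 0 < del) by (apply Rmin_glb_lt; [lra| apply Rdiv_lt_0_compat; nra]).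
  assert (Hdel1 : del <= wD / 2) by apply Rmin_l.
  assert (Hdel2 : del <= eps / (4 * d * wD)) by apply Rmin_r.
  set (wl := wD - del).
  assert (Hwl : 0 < wl) by (unfold wl; lra).
  assert (Hwl' : wl < wD) by (unfold wl; lra).
  assert (Hthl : wl * x1 - atan (k / wl) < PI / 2) by (rewrite <- HthD; apply theta_lt; auto).
  assert (HUl : 0 < uF k wl x1).
  { apply u_pos; auto. pose proof (atan_bound (k / wl)). assert (0 < wl * x1) by nra. lra. }
  set (Dl := Rabs (duF k wl x1)).
  set (M := k + / (L - x1) + 2 * Dl / uF k wl x1 + 1).
  assert (HiL : 0 < / (L - x1)) by (apply Rinv_0_lt_compat; lra).
  assert (HDl : 0 <= 2 * Dl / uF k wl x1) by (apply Rdiv_le_0_compat; auto; unfold Dl; pose proof (Rabs_pos (duF k wl x1)); lra).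
  assert (HM : 0 < M) by (unfold M; lra).
  exists (d * (wD * wD + M * M)). intros xi Hxi.
  assert (Hxi' : wD * wD + M * M < xi / d).
  { apply Rmult_lt_reg_l with d; auto. replace (d * (xi / d)) with xi by (field; lra). lra. }
  assert (Hpos : forall w, wl <= w <= wD -> M * M < xi / d - w * w) by (intros; nra).
  assert (Hsq : forall w, wl <= w <= wD -> M < sqrt (xi / d - w * w)).
  { intros w Hw. rewrite <- (sqrt_square M) by lra. specialize (Hpos w Hw). apply sqrt_lt_1; nra. }
  destruct (Ranalysis5.IVT_interv (fun w => - Gf L x1 k xi d w) wl wD) as [z [Hz Ez]].
  - intros w Hw. apply cpt_der. unfold Gf, duF, uF, vF, dvF. specialize (Hpos w Hw).
    auto_derive. nra.
  - exact Hwl'.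
  - assert (0 < Gf L x1 k xi d wl); [|lra].
    unfold Gf. specialize (Hsq wl ltac:(lra)).
    apply G_pos; auto; unfold M in Hsq; unfold Dl in *; lra.
  - unfold Gf. rewrite HUD.
    assert (0 < vF L k (sqrt (xi / d - wD * wD)) x1).
    { apply vF_pos; auto; try lra. specialize (Hsq wD ltac:(lra)). lra. }
    nra.
  - assert (Hz' : z < wD).
    { destruct (Req_dec z wD) as [E|E]; [|lra]. subst z. exfalso.
      unfold Gf in Ez. rewrite HUD in Ez.
      assert (0 < vF L k (sqrt (xi / d - wD * wD)) x1).
      { apply vF_pos; auto; try lra. specialize (Hsq wD ltac:(lra)). lra. }
      nra. }
    assert (Hz0 : 0 < z) by lra.
    assert (Hthz : z * x1 - atan (k / z) < PI / 2) by (rewrite <- HthD; apply theta_lt; auto).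
    assert (Huz : forall t, 0 <= t <= x1 -> 0 < uF k z t).
    { intros t Ht. apply u_pos; auto. pose proof (atan_bound (k / z)).
      assert (z * t <= z * x1) by (apply Rmult_le_compat_l; lra).
      assert (0 <= z * t) by nra. lra. }
    assert (HGz : Gf L x1 (a / (2 * d)) xi d z = 0) by (fold k; lra).
    assert (HP := exist_xi d a r x1 L xi z Hd Ha Hx1 HL Hz0 ltac:(specialize (Hpos z Hz); nra) HGz Huz).
    fold k in HP.
    assert (EX : lambda1 d a (fun x => r - xi * chi x1 L x) 0 L = r - d * k * k - d * z * z).
    { unfold lambda1.
      pose proof (epsilon_spec (inhabits 0) (fun lam => is_principal_eig d a (fun x => r - xi * chi x1 L x) 0 L lam) (ex_intro _ _ HP)) as HE.
      set (e := epsilon (inhabits 0) (fun lam => is_principal_eig d a (fun x => r - xi * chi x1 L x) 0 L lam)) in HE |- *.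
      destruct HE as [p2 [dp2 [S2 [P2 [B2 B2']]]]]. destruct HP as [p1 [dp1 [S1 [P1 [B1 B1']]]]].
      apply (uniq d a (fun x => r - xi * chi x1 L x) 0 L x1 e _ p2 dp2 p1 dp1); auto; try lra.
      - intros t Ht Htx. destruct (Rlt_dec t x1) as [Hlt|Hlt].
        + apply continuous_ext_loc with (fun _ => r - xi * 0).
          * apply locally_interior with 0 x1; [lra|]. intros y Hy. unfold chi.
            destruct (Rlt_le_dec x1 y); [lra|]. reflexivity.
          * apply cont_const.
        + apply continuous_ext_loc with (fun _ => r - xi * 1).
          * apply locally_interior with x1 L; [lra|]. intros y Hy. unfold chi.
            destruct (Rlt_le_dec x1 y); [|lra]. destruct (Rle_dec y L); [|lra]. reflexivity.
          * apply cont_const.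
      - rewrite B2', B1'. ring. }
    rewrite EX.
    replace (r - d * k * k - d * z * z - (r - d * k * k - d * wD * wD)) with (d * ((wD - z) * (wD + z))) by ring.
    assert (0 <= wD - z <= del) by (unfold wl in Hz; lra).
    assert (Hb1 : (wD - z) * (wD + z) <= (eps / (4 * d * wD)) * (2 * wD)).
    { apply Rmult_le_compat; lra. }
    assert (H0 : d * ((wD - z) * (wD + z)) <= d * ((eps / (4 * d * wD)) * (2 * wD))).
    { apply Rmult_le_compat_l; lra. }
    replace (d * ((eps / (4 * d * wD)) * (2 * wD))) with (eps / 2) in H0 by (field; lra).
    rewrite Rabs_pos_eq by (apply Rmult_le_pos; [lra| apply Rmult_le_pos; lra]). lra.
Qed.
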